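(* Let $L$ be a positive definite lattice with $\operatorname{rank} L\geq 4$ and let $\mathcal{A}_{a,m}$ be an admissible arithmetic progression. If $\mathcal{A}_{a,m}\subseteq Q(\operatorname{gen} L)$, then $\mathcal{A}_{a,m}\cap Q(L)\neq\emptyset$.
   Context: A lattice is a finitely generated $\mathbb{Z}$-submodule $L$ of a finite-dimensional quadratic space $(V,Q)$ over $\mathbb{Q}$, with associated symmetric bilinear form $B$ satisfying $Q(v)=B(v,v)$; it is assumed throughout that the scale of $L$ (the fractional ideal generated by $\{B(x,y):x,y\in L\}$) equals $\mathbb{Z}$. $L$ is positive definite if $Q(v)>0$ for all nonzero $v\in L$. $Q(L)=\{Q(v):v\in L\}$. For a prime $p$, $L_p=\mathbb{Z}_p\otimes L$. $\operatorname{gen}L$ is the genus of $L$ and $Q(\operatorname{gen}L)=\{a\in\mathbb{Z}: a\in Q(K)\text{ for some }K\in\operatorname{gen}L\}$, equivalently the set of integers $a$ with $a\in Q(L_p)$ for all primes $p$. For positive integers $a<m$, $\mathcal{A}_{a,m}=\{a+mx : x\in\mathbb{Z},\ x\geq 0\}$, and $\mathcal{A}_{a,m}$ is admissible if $\operatorname{ord}_p a<\operatorname{ord}_p m$ for every prime $p\mid m$. *)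

(* Defs.v *)
From mathcomp Require Import all_boot all_order all_algebra.
Set Implicit Arguments. Unset Strict Implicit. Unset Printing Implicit Defensive.
Import Order.TTheory GRing.Theory Num.Theory.
Local Open Scope ring_scope.

(* A lattice L of rank n is given by its Gram matrix G : 'M[int]_n with respect
   to a Z-basis e_1..e_n, i.e. G i j = B(e_i, e_j).  Since the scale of L is Z, all B(x,y) are
   integers, so G has integer entries. *)

Definition bil (n : nat) (G : 'M[int]_n) (x y : 'cV[int]_n) : int :=
  (x^T *m G *m y) ord0 ord0.

Definition qf (n : nat) (G : 'M[int]_n) (v : 'cV[int]_n) : int := bil G v v.

Definition symmetric_gram (n : nat) (G : 'M[int]_n) : Prop := G^T = G.

Definition pos_def (n : nat) (G : 'M[int]_n) : Prop :=
  forall v : 'cV[int]_n, v != 0 -> 0 < qf G v.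

(* scale L = Z: the ideal generated by {B(x,y) : x,y in L} is Z, i.e. (all
   values are integers, and) the only common divisors of all B(x,y) are units. *)
Definition scale_Z (n : nat) (G : 'M[int]_n) : Prop :=
  forall d : int, (forall x y : 'cV[int]_n, (d %| bil G x y)%Z) -> (d %| 1)%Z.

(* p-adic integers, as the inverse limit of Z/p^k Z: a p-adic integer vector
   is a sequence (x_k)_k of integer vectors with x_{k+1} = x_k mod p^k
   (componentwise).  It is a representation of a in L_p = Z_p (x) L if
   Q(x) = a in Z_p, i.e. Q(x_k) = a mod p^k for every k. *)
Definition padic_coherent (n p : nat) (x : nat -> 'cV[int]_n) : Prop :=
  forall k (i : 'I_n), (x k.+1 i ord0 == x k i ord0 %[mod (p ^ k)%:Z])%Z.

Definition rep_local (n : nat) (G : 'M[int]_n) (p : nat) (a : int) : Prop :=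
  exists x : nat -> 'cV[int]_n,
    padic_coherent p x /\ forall k, (qf G (x k) == a %[mod (p ^ k)%:Z])%Z.

Definition rep_genus (n : nat) (G : 'M[int]_n) (a : int) : Prop :=
  forall p : nat, prime p -> rep_local G p a.

Definition rep_global (n : nat) (G : 'M[int]_n) (a : int) : Prop :=
  exists v : 'cV[int]_n, qf G v = a.

Definition AP (a m : nat) : nat -> Prop := fun t => exists x : nat, t = (a + m * x)%N.

Definition admissible (a m : nat) : Prop :=
  (0 < a)%N /\ (a < m)%N /\
  forall p : nat, prime p -> (p %| m)%N -> (logn p a < logn p m)%N.

(* Main.v *)
Require Import Defs.
From mathcomp Require Import all_boot all_order all_algebra.
From mathcomp Require Import ring zify.
Import GRing.Theory Num.Theory.
Local Open Scope ring_scope.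

Lemma qf_shift n (G : 'M[int]_n) w z (d : int) :
  qf G (w + d *: z) = qf G w + d * (bil G z w + bil G w z + d * bil G z z).
Proof.
rewrite /qf /bil.
have -> : (w + d *: z)^T = w^T + d *: z^T by apply/matrixP => i j; rewrite !mxE.
rewrite !mulmxDl !mulmxDr -!scalemxAl -!scalemxAr.
rewrite ?scalerA !mxE; ring.
Qed.

Lemma qf_dvd n (G : 'M[int]_n) w z (d : int) :
  (d %| qf G (w + d *: z) - qf G w)%Z.
Proof. rewrite qf_shift addrAC subrr add0r; exact: dvdz_mulr. Qed.

Lemma loc_to_mod n (G : 'M[int]_n) (a : int) (d : nat) :
  (0 < d)%N -> (forall p, prime p -> (p %| d)%N -> rep_local G p a) ->
  exists v, ((d%:Z) %| qf G v - a)%Z.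
Proof.
elim/ltn_ind: d => d IH d0 H.
case: (ltnP 1 d) => [d1|dle1]; last first.
  have -> : d = 1%N by lia.
  by exists 0; rewrite dvd1z.
have pp := pdiv_prime d1; set p := pdiv d in pp.
have pd : (p %| d)%N by exact: pdiv_dvd.
have [m cpm dE] := pfactor_coprime pp d0.
set e := logn p d in dE.
have e0 : (0 < e)%N by rewrite /e logn_gt0 mem_primes pp d0 pd.
have pe2 : (2 <= p ^ e)%N.
  have p2 := prime_gt1 pp.
  case: (e) e0 => // e' _; rewrite expnS.
  have : (0 < p ^ e')%N by rewrite expn_gt0 prime_gt0.
  nia.
have m0 : (0 < m)%N by move: d0; rewrite dE muln_gt0 => /andP[].
have md : (m < d)%N by rewrite dE; nia.
have [v2 Hv2] : exists v, ((m%:Z) %| qf G v - a)%Z.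
  apply: IH => // q qp qm; apply: H => //; rewrite dE; exact: dvdn_mulr.
have [x [_ Hx]] := H p pp pd.
set v1 := x e.
have Hv1 : (((p ^ e)%N%:Z) %| qf G v1 - a)%Z by rewrite -eqz_mod_dvd; exact: Hx.
have cop : coprime (p ^ e) m by rewrite coprime_pexpl.
have copz : coprimez ((p ^ e)%N%:Z) (m%:Z) by rewrite coprimezE.
have [u [w Huw]] := Bezoutz ((p ^ e)%N%:Z) (m%:Z).
move: copz; rewrite /coprimez => /eqP g1; rewrite g1 in Huw.
set pe := ((p ^ e)%N%:Z) in Huw Hv1 g1 *.
exists (v1 + (pe * u) *: (v2 - v1)).
have cz : coprimez pe m%:Z by rewrite /coprimez g1.
rewrite dE PoszM [(m%:Z * _)]mulrC (Gauss_dvdz _ cz).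
apply/andP; split.
  have -> : qf G (v1 + (pe * u) *: (v2 - v1)) - a =
    (qf G (v1 + pe *: (u *: (v2 - v1))) - qf G v1) + (qf G v1 - a).
    by rewrite scalerA addrA subrK.
  by apply: rpredD => //; exact: qf_dvd.
have -> : v1 + (pe * u) *: (v2 - v1) = v2 + (m%:Z) *: (- w *: (v2 - v1)).
  apply/matrixP => i j; rewrite !mxE.
  have -> : pe * u = 1 - w * m%:Z by rewrite -Huw; ring.
  ring.
have -> : qf G (v2 + (m%:Z) *: (- w *: (v2 - v1))) - a =
    (qf G (v2 + (m%:Z) *: (- w *: (v2 - v1))) - qf G v2) + (qf G v2 - a).
  by rewrite addrA subrK.
by apply: rpredD => //; exact: qf_dvd.
Qed.

Theorem lemma1 (n : nat) (G : 'M[int]_n) (a m : nat) :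
  symmetric_gram G -> pos_def G -> scale_Z G -> (4 <= n)%N ->
  admissible a m ->
  (forall t : nat, AP a m t -> rep_genus G t%:Z) ->
  exists t : nat, AP a m t /\ rep_global G t%:Z.
Proof.
move=> _ pd _ _ [a0 [am _]] Hgen.
have Ha : rep_genus G a%:Z by apply: Hgen; exists 0%N; rewrite muln0 addn0.
have m0 : (0 < m)%N by lia.
have [v Hv] := @loc_to_mod _ G a%:Z m m0 (fun p pp _ => Ha p pp).
have q0 : 0 <= qf G v.
  case: (eqVneq v 0) => [->|nz]; last exact: Order.POrderTheory.ltW (pd v nz).
  by rewrite /qf /bil mulmx0 mxE.
exists `|qf G v|%N; split; last first.
  by exists v; rewrite gez0_abs.
move: Hv; rewrite -{1}(gez0_abs q0).
rewrite -eqz_mod_dvd !modz_nat => /eqP [] Hmod.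
rewrite (modn_small am) in Hmod.
exists (`|qf G v| %/ m)%N.
have := divn_eq `|qf G v|%N m; rewrite /AP; lia.
Qed.
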